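(* There is no assignment rule (defined for profiles of every number $n$ of agents over alternatives $\{A,B\}$) that is both stable and strategyproof over the domain of all minimally-interleaving profiles.
   Context: Agents $V=\{v_1,\dots,v_n\}$; two alternatives $A,B$. Each agent $v_i$ has a strict total order $\succ_i$ on $\{A,B\}\times\{1,\dots,n\}$, where $(S,j)$ means being in the community adopting $S$ of size $j$; it is monotonic if $(S,j)\succ_i(S,k)$ whenever $k<j$. A preference is non-interleaving if it is monotonic and $(A,1)\succ(B,n)$ or $(B,1)\succ(A,n)$. A preference is minimally-interleaving if it is monotonic and either $(A,2)\succ(B,n)\succ(A,1)\succ(B,n-1)$ or $(B,2)\succ(A,n)\succ(B,1)\succ(A,n-1)$. A profile is minimally-interleaving if each of its orders is non-interleaving or minimally-interleaving. An assignment is a map $f:V\to\{A,B\}$; $v_i$ prefers $f$ to $g$ if $(f(v_i),|f^{-1}(f(v_i))|)\succ_i(g(v_i),|g^{-1}(g(v_i))|)$. An assignment $f$ is stable if there is no assignment $f'\neq f$ such that every agent $v_i$ with $f'(v_i)\neq f(v_i)$ prefers $f'$ to $f$. An assignment rule $R$ maps profiles to assignments; it is stable if $R(V)$ is stable whenever $V$ admits a stable assignment. $R$ is strategyproof over a domain $D$ if for every $V\in D$ with $f=R(V)$ there is no agent $v_i$ and monotonic order $\succ_i'$ such that, with $V'$ obtained by replacing $\succ_i$ by $\succ_i'$ and $f'=R(V')$, agent $v_i$ prefers $f'$ to $f$ according to her true order. *)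

(* Defs.v *)
From mathcomp Require Import all_boot.
Set Implicit Arguments. Unset Strict Implicit. Unset Printing Implicit Defensive.

Definition altA : bool := true.
Definition altB : bool := false.

(* Agents are 'I_n.  An outcome (S, k) with k : 'I_n stands for the paper's
   (S, k+1): being in the community adopting S of size k+1 (sizes 1..n). *)
Definition outcome (n : nat) := (bool * 'I_n)%type.

Definition strict_total_order n (r : rel (outcome n)) : Prop :=
  irreflexive r /\ transitive r /\ (forall x y, x != y -> r x y || r y x).

(* The paper's (S, j) >_r (T, k), with j, k paper-style sizes in 1..n. *)
Definition prefP n (r : rel (outcome n)) (S : bool) (j : nat) (T : bool) (k : nat)
  : Prop :=
  exists a b : 'I_n, a.+1 = j /\ b.+1 = k /\ r (S, a) (T, b).

Definition monotonic n (r : rel (outcome n)) : Prop :=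
  forall (S : bool) (j k : 'I_n), k < j -> r (S, j) (S, k).

Definition non_interleaving n (r : rel (outcome n)) : Prop :=
  monotonic r /\ (prefP r altA 1 altB n \/ prefP r altB 1 altA n).

Definition minimally_interleaving n (r : rel (outcome n)) : Prop :=
  monotonic r /\
  ((prefP r altA 2 altB n /\ prefP r altB n altA 1 /\ prefP r altA 1 altB n.-1)
   \/
   (prefP r altB 2 altA n /\ prefP r altA n altB 1 /\ prefP r altB 1 altA n.-1)).

Definition profile (n : nat) := 'I_n -> rel (outcome n).

Definition is_profile n (V : profile n) : Prop :=
  forall i, strict_total_order (V i).

Definition min_interleaving_profile n (V : profile n) : Prop :=
  is_profile V /\
  forall i, non_interleaving (V i) \/ minimally_interleaving (V i).

Definition assignment (n : nat) := {ffun 'I_n -> bool}.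

(* size of the community of agent i under f, minus one (as an ordinal);
   the default [i] of insubd is never used since #|...| is in 1..n. *)
Definition csize n (f : assignment n) (i : 'I_n) : 'I_n :=
  insubd i (#|[set j | f j == f i]|.-1).

Definition outc n (f : assignment n) (i : 'I_n) : outcome n := (f i, csize f i).

Definition prefers n (r : rel (outcome n)) (f g : assignment n) (i : 'I_n) : bool :=
  r (outc f i) (outc g i).

Definition stable_assignment n (V : profile n) (f : assignment n) : Prop :=
  ~ exists g : assignment n,
      g != f /\ forall i, g i != f i -> prefers (V i) g f i.

Definition admits_stable n (V : profile n) : Prop :=
  exists f, stable_assignment V f.

Definition rule := forall n : nat, profile n -> assignment n.

Definition rule_stable (R : rule) : Prop :=
  forall n (V : profile n), is_profile V -> admits_stable V ->
    stable_assignment V (R n V).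

Definition replace n (V : profile n) (i : 'I_n) (r' : rel (outcome n)) : profile n :=
  fun j => if j == i then r' else V j.

Definition strategyproof_MI (R : rule) : Prop :=
  forall n (V : profile n), min_interleaving_profile V ->
    forall (i : 'I_n) (r' : rel (outcome n)),
      strict_total_order r' -> monotonic r' ->
      ~~ prefers (V i) (R n (replace V i r')) (R n V) i.

(* Main.v *)
Require Import Defs.
From mathcomp Require Import all_boot.
From mathcomp Require Import zify.

Set Implicit Arguments. Unset Strict Implicit. Unset Printing Implicit Defensive.

Definition o0 : 'I_2 := Ordinal (isT : 0 < 2).
Definition o1 : 'I_2 := Ordinal (isT : 1 < 2).

Lemma ord2P (i : 'I_2) : i = o0 \/ i = o1.
Proof.
case: i => [[|[|m]] p]; [left|right|by []]; by apply: val_inj.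
Qed.

Definition mk (a b : bool) : assignment 2 := [ffun i : 'I_2 => if val i == 0 then a else b].

Lemma ffun2 (f : assignment 2) : f = mk (f o0) (f o1).
Proof.
apply/ffunP => i; rewrite ffunE.
by case: (ord2P i) => ->.
Qed.

Lemma card2 (P : pred 'I_2) : #|P| = P o0 + P o1.
Proof.
rewrite -sum1_card big_mkcond /= !big_ord_recl big_ord0 /=.
have -> : lift ord0 ord0 = o1 by apply: val_inj.
have -> : (ord0 : 'I_2) = o0 by apply: val_inj.
by rewrite !unfold_in; case: (P o0); case: (P o1).
Qed.

Lemma val_csize a b i : val (csize (mk a b) i) = (a == b).
Proof.
rewrite /csize val_insubd cardsE card2 !ffunE.
case: (ord2P i) => -> /=; by case: a; case: b.
Qed.

Definition rk (h : bool -> nat -> nat) : rel (outcome 2) :=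
  fun x y => h y.1 (val y.2) < h x.1 (val x.2).

Lemma prefers_mk h a b c d i :
  prefers (rk h) (mk a b) (mk c d) i =
  (h (if val i == 0 then c else d) (c == d) < h (if val i == 0 then a else b) (a == b)).
Proof. by rewrite /prefers /rk /outc /= !ffunE !val_csize. Qed.

Definition chk (h0 h1 : bool -> nat -> nat) (a b c d : bool) : bool :=
  ((c != a) || (d != b)) ==>
     ~~ (((c != a) ==> (h0 a (a == b) < h0 c (c == d))) &&
         ((d != b) ==> (h1 b (a == b) < h1 d (c == d)))).

Definition stab2 (h0 h1 : bool -> nat -> nat) (a b : bool) : bool :=
  [&& chk h0 h1 a b false false, chk h0 h1 a b false true,
      chk h0 h1 a b true false & chk h0 h1 a b true true].

Lemma stab2P h0 h1 a b : stab2 h0 h1 a b <-> forall c d, chk h0 h1 a b c d.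
Proof.
split; last by move=> H; rewrite /stab2 !H.
by move=> /and4P [H1 H2 H3 H4] [] [].
Qed.

Lemma mk_eq a b c d : (mk c d == mk a b) = (c == a) && (d == b).
Proof.
apply/eqP/andP.
  move/ffunP=> H; have := H o0; have := H o1; rewrite !ffunE /= => -> ->; by [].
by case=> /eqP -> /eqP ->.
Qed.

Lemma stable2P V h0 h1 a b : V o0 = rk h0 -> V o1 = rk h1 ->
  stable_assignment V (mk a b) <-> stab2 h0 h1 a b.
Proof.
move=> E0 E1; split.
  move=> Hs; apply/stab2P => c d; apply/implyP => Hne.
  apply/negP => /andP [H0 H1]; apply: Hs; exists (mk c d); split.
    by rewrite mk_eq negb_and.
  move=> i; case: (ord2P i) => -> ; rewrite !ffunE /= ?E0 ?E1 prefers_mk /=.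
    by move=> Hc; rewrite (implyP H0 Hc).
  by move=> Hd; rewrite (implyP H1 Hd).
move=> /stab2P Hs [g [Hne H]]; rewrite (ffun2 g) in Hne H.
move: (g o0) (g o1) Hne H => c d Hne H.
have := H o0; have := H o1; rewrite !ffunE /= E0 E1 !prefers_mk /= => H1 H0.
have := Hs c d => /implyP; rewrite mk_eq negb_and in Hne.
move=> /(_ Hne) /negP; apply; apply/andP; split; apply/implyP; [exact: H0 | exact: H1].
Qed.

Lemma rk_sto h : (forall S T a b, a < 2 -> b < 2 -> h S a = h T b -> S = T /\ a = b) ->
  strict_total_order (rk h).
Proof.
move=> Hi; split; [|split].
- by move=> x; rewrite /rk ltnn.
- move=> y x z; rewrite /rk => H1 H2; exact: ltn_trans H2 H1.
- move=> [S a] [T b] Hne; rewrite /rk /=.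
  case: (ltngtP (h T (val b)) (h S (val a))) => //= Heq.
  have [E1 E2] := Hi _ _ _ _ (ltn_ord a) (ltn_ord b) (esym Heq).
  move: Hne; rewrite E1 (val_inj E2) => /eqP; by [].
Qed.

Definition hAmi (S : bool) (k : nat) := 2 * k + S.
Definition hBmi (S : bool) (k : nat) := 2 * k + ~~ S.
Definition hAni (S : bool) (k : nat) := k + 2 * S.
Definition hBni (S : bool) (k : nat) := k + 2 * ~~ S.

Lemma inj_tac (h : bool -> nat -> nat) :
  (forall a b, a < 2 -> b < 2 -> h true a = h true b -> a = b) ->
  (forall a b, a < 2 -> b < 2 -> h false a = h false b -> a = b) ->
  (forall a b, a < 2 -> b < 2 -> h true a <> h false b) ->
  forall S T a b, a < 2 -> b < 2 -> h S a = h T b -> S = T /\ a = b.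
Proof.
move=> H1 H2 H3 [] [] a b Ha Hb E.
- by split; [|exact: H1].
- by case: (H3 _ _ Ha Hb E).
- by case: (H3 _ _ Hb Ha (esym E)).
- by split; [|exact: H2].
Qed.

Ltac injh := apply: inj_tac => a b Ha Hb; rewrite /hAmi /hBmi /hAni /hBni /=; lia.

Lemma sto_Ami : strict_total_order (rk hAmi). Proof. apply: rk_sto; injh. Qed.
Lemma sto_Bmi : strict_total_order (rk hBmi). Proof. apply: rk_sto; injh. Qed.
Lemma sto_Ani : strict_total_order (rk hAni). Proof. apply: rk_sto; injh. Qed.
Lemma sto_Bni : strict_total_order (rk hBni). Proof. apply: rk_sto; injh. Qed.

Ltac monoh := move=> [] j k; rewrite /rk /hAmi /hBmi /hAni /hBni /=; lia.
Lemma mono_Ami : monotonic (rk hAmi). Proof. monoh. Qed.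
Lemma mono_Bmi : monotonic (rk hBmi). Proof. monoh. Qed.
Lemma mono_Ani : monotonic (rk hAni). Proof. monoh. Qed.
Lemma mono_Bni : monotonic (rk hBni). Proof. monoh. Qed.

Lemma mi_Ami : minimally_interleaving (rk hAmi).
Proof.
split; first exact: mono_Ami.
left; split; [|split]; [exists o1, o1 | exists o1, o0 | exists o0, o0]; by [].
Qed.

Lemma mi_Bmi : minimally_interleaving (rk hBmi).
Proof.
split; first exact: mono_Bmi.
right; split; [|split]; [exists o1, o1 | exists o1, o0 | exists o0, o0]; by [].
Qed.

Definition V0 : profile 2 := fun i => if val i == 0 then rk hAmi else rk hBmi.

Lemma is_profile2 V : strict_total_order (V o0) -> strict_total_order (V o1) -> is_profile V.
Proof. by move=> H0 H1 i; case: (ord2P i) => ->. Qed.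

Theorem mainTheorem8 :
  ~ exists R : rule, rule_stable R /\ strategyproof_MI R.
Proof.
move=> [R [Hst Hsp]].
have P0 : is_profile V0 by apply: is_profile2; [exact: sto_Ami | exact: sto_Bmi].
have MI0 : min_interleaving_profile V0.
  split => // i; right; case: (ord2P i) => ->; [exact: mi_Ami | exact: mi_Bmi].
have A0 : admits_stable V0 by exists (mk true true); by apply/(@stable2P V0 hAmi hBmi true true (erefl _) (erefl _)).
have S0 := Hst 2 V0 P0 A0.
have [a [b E]] : exists a b, R 2 V0 = mk a b by exists (R 2 V0 o0), (R 2 V0 o1); exact: ffun2.
rewrite E in S0; move/(@stable2P V0 hAmi hBmi a b (erefl _) (erefl _)): S0.
case: a E; case: b => E //= _.
- (* AA: agent o1 deviates *)
  have Hsp1 := Hsp 2 V0 MI0 o1 (rk hBni) sto_Bni mono_Bni.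
  set V1 := replace V0 o1 (rk hBni) in Hsp1.
  have E10 : V1 o0 = rk hAmi by [].
  have E11 : V1 o1 = rk hBni by rewrite /V1 /replace eqxx.
  have P1 : is_profile V1 by apply: is_profile2; rewrite ?E10 ?E11; [exact: sto_Ami | exact: sto_Bni].
  have A1 : admits_stable V1 by exists (mk false false); apply/(stable2P _ _ E10 E11).
  have S1 := Hst 2 V1 P1 A1.
  have [c [d F]] : exists c d, R 2 V1 = mk c d by exists (R 2 V1 o0), (R 2 V1 o1); exact: ffun2.
  rewrite F in S1 Hsp1; move/(@stable2P V1 hAmi hBni c d E10 E11): S1.
  rewrite E prefers_mk /= in Hsp1.
  by case: c F Hsp1; case: d.
- (* BB: agent o0 deviates *)
  have Hsp1 := Hsp 2 V0 MI0 o0 (rk hAni) sto_Ani mono_Ani.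
  set V1 := replace V0 o0 (rk hAni) in Hsp1.
  have E10 : V1 o0 = rk hAni by rewrite /V1 /replace eqxx.
  have E11 : V1 o1 = rk hBmi by [].
  have P1 : is_profile V1 by apply: is_profile2; rewrite ?E10 ?E11; [exact: sto_Ani | exact: sto_Bmi].
  have A1 : admits_stable V1 by exists (mk true true); apply/(stable2P _ _ E10 E11).
  have S1 := Hst 2 V1 P1 A1.
  have [c [d F]] : exists c d, R 2 V1 = mk c d by exists (R 2 V1 o0), (R 2 V1 o1); exact: ffun2.
  rewrite F in S1 Hsp1; move/(@stable2P V1 hAni hBmi c d E10 E11): S1.
  rewrite E prefers_mk /= in Hsp1.
  by case: c F Hsp1; case: d.
Qed.
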